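(* Let $N\ge 1$, let $\xi\in\mathbf{C}^*$, let $a_1,\dots,a_N\in\mathbf{C}^*$, and let $t_1,\dots,t_N\in\mathbf{C}$. On the phase space $M_{2N}=\Sigma_{t_1}\times\cdots\times\Sigma_{t_N}$ (notation in the context), let $\mathcal{T}(z)$ be the reflection monodromy matrix, $t(z)=\tfrac12\operatorname{tr}\mathcal{T}(z)$ the reflection transfer matrix, and $P_0,\dots,P_N$ the reflection Hamiltonians. Then $$\lim_{z\to 1}(z-z^{-1})\,t(z)=\sum_{j=0}^N P_j=(\xi-\xi^{-1})\prod_{k=1}^N\big(\omega_k-a_k^2-a_k^{-2}\big),$$ where $\omega_k=t_k$ is the value of the Casimir at site $k$.
   Context: $SL_2^*$ denotes the Poisson variety with coordinate ring $\mathbf{C}[e,f,k^{\pm1}]$ and Poisson brackets $\{k,e\}=ke$, $\{k,f\}=-kf$, $\{e,f\}=2(k^2-k^{-2})$. The function $\omega=k^2+k^{-2}+ef$ is a Casimir and $\Sigma_t=\{\omega=t\}$ is a (two-dimensional, for generic $t$) symplectic leaf. The phase space is $M_{2N}=\Sigma_{t_1}\times\cdots\times\Sigma_{t_N}$ with coordinates $(e_j,f_j,k_j)$ at site $j$ (functions at different sites Poisson commute), and $\omega_j=k_j^2+k_j^{-2}+e_jf_j=t_j$. Set $L_j(z)=\begin{pmatrix} zk_j-z^{-1}k_j^{-1} & e_j\\ f_j & zk_j^{-1}-z^{-1}k_j\end{pmatrix}$ and $K(z)=\begin{pmatrix}\xi z-z^{-1}\xi^{-1}&0\\0&\xi z^{-1}-z\xi^{-1}\end{pmatrix}$.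 The reflection monodromy matrix is $$\mathcal{T}(z)=\frac{1}{z-z^{-1}}L_1(a_1z)\cdots L_N(a_Nz)\,K(z)\,L_N(z/a_N)\cdots L_1(z/a_1)=\begin{pmatrix}A(z)&B(z)\\C(z)&D(z)\end{pmatrix},$$ and $t(z)=\frac12\operatorname{tr}\mathcal{T}(z)$. With $w=z^2$, the reflection Hamiltonians $P_0,\dots,P_N$ are the functions on $M_{2N}$ determined by the expansion $$t(z)=\frac12\Big(\frac{w+1}{w-1}\Big)\Big(P_N\frac{w^N+w^{-N}}{2}+P_{N-1}\frac{w^{N-1}+w^{1-N}}{2}+\cdots+P_1\frac{w+w^{-1}}{2}+P_0\Big).$$ *)

(* Defs.v *)
From HB Require Import structures.
From mathcomp Require Import all_boot all_order all_algebra.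
From mathcomp Require Import all_classical all_reals all_analysis.
From mathcomp Require Import complex.
Set Implicit Arguments. Unset Strict Implicit. Unset Printing Implicit Defensive.
Import Order.TTheory GRing.Theory Num.Theory.
Import numFieldTopology.Exports numFieldNormedType.Exports.
Local Open Scope ring_scope.
Local Open Scope complex_scope.

(* The complex numbers: C = R[i] for a real type R (e.g. the reals),
   seen as a numClosedFieldType so that it gets its (modulus) norm topology. *)
Definition C (R : realType) : numClosedFieldType := R[i].

Section Reflection.
Variable R : realType.
Local Notation C := (C R).

Definition Lax (e f k z : C) : 'M[C]_2 :=
  \matrix_(i < 2, j < 2)
    if (i == 0) && (j == 0) then z * k - z^-1 * k^-1
    else if (i == 0) && (j == 1) then e
    else if (i == 1) && (j == 0) then f
    else z * k^-1 - z^-1 * k.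

Definition Kmat (xi z : C) : 'M[C]_2 :=
  \matrix_(i < 2, j < 2)
    if (i == 0) && (j == 0) then xi * z - z^-1 * xi^-1
    else if (i == 1) && (j == 1) then xi * z^-1 - z * xi^-1
    else 0.

Definition monodromy (N : nat) (xi : C) (a e f k : 'I_N -> C) (z : C)
  : 'M[C]_2 :=
  (z - z^-1)^-1 *:
   ((\prod_(j < N) Lax (e j) (f j) (k j) (a j * z)) * Kmat xi z *
    (\prod_(j < N) Lax (e (rev_ord j)) (f (rev_ord j)) (k (rev_ord j))
                       (z / a (rev_ord j)))).

Definition transfer (N : nat) (xi : C) (a e f k : 'I_N -> C) (z : C) : C :=
  2^-1 * \tr (monodromy xi a e f k z).

Definition casimir (e f k : C) : C := k ^+ 2 + k ^- 2 + e * f.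

(* The values P_0..P_N satisfy the defining expansion of the reflection
   Hamiltonians at the given point: for all z with z != 0, z^2 != 1, w = z^2,
   t(z) = 1/2 (w+1)/(w-1) (sum_j P_j (w^j + w^-j)/2)
   (for j = 0 the term (w^0 + w^0)/2 = 1, i.e. the term P_0). *)
Definition reflection_hamiltonians (N : nat) (xi : C) (a e f k : 'I_N -> C)
  (P : 'I_N.+1 -> C) : Prop :=
  forall z : C, z != 0 -> z ^+ 2 != 1 ->
    let w := z ^+ 2 in
    transfer xi a e f k z =
      2^-1 * ((w + 1) / (w - 1)) *
      \sum_(j < N.+1) P j * ((w ^+ j + w ^- j) / 2).

End Reflection.

(* Main.v *)
Require Import Defs.
From HB Require Import structures.
From mathcomp Require Import all_boot all_order all_algebra.
From mathcomp Require Import all_classical all_reals all_analysis.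
From mathcomp Require Import complex.
From mathcomp Require Import ring lra.
Import Order.TTheory GRing.Theory Num.Theory.
Import numFieldTopology.Exports numFieldNormedType.Exports.
Local Open Scope ring_scope.
Local Open Scope complex_scope.
Local Open Scope classical_set_scope.

Section S.
Variable R : realType.
Local Notation C := (C R).

Lemma sum2 (F : 'I_2 -> C) : \sum_(i < 2) F i = F 0 + F 1.
Proof. rewrite !big_ord_recl big_ord0 addr0; congr (_ + F _); exact: val_inj. Qed.

Lemma LL (e f k a : C) : a != 0 -> k != 0 ->
  Lax e f k (a * 1) * Lax e f k (1 / a) = (casimir e f k - a ^+ 2 - a ^- 2)%:M.
Proof.
move=> ha hk; rewrite -mulmxE; apply/matrixP => i j.
rewrite !mxE !sum2 !mxE /casimir.
case: i => [[|[|?]] ?]; case: j => [[|[|?]] ?] //=; field; by rewrite ha hk.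
Qed.

Lemma Kmat1 (xi : C) : Kmat xi 1 = (xi - xi^-1)%:M.
Proof.
apply/matrixP => i j; rewrite !mxE.
case: i => [[|[|?]] ?]; case: j => [[|[|?]] ?] //=; rewrite invr1; ring.
Qed.

Lemma telescope n (A B : 'I_n -> 'M[C]_2) (d : 'I_n -> C) (c : C) :
  (forall j, A j * B j = (d j)%:M) ->
  (\prod_(j < n) A j) * c%:M * (\prod_(j < n) B (rev_ord j)) = (c * \prod_(j < n) d j)%:M.
Proof.
elim: n A B d => [|n IH] A B d H.
  by rewrite !big_ord0 !mulr1 mul1r.
rewrite big_ord_recl big_ord_recr big_ord_recl /=.
have E : forall j : 'I_n, B (rev_ord (widen_ord (leqnSn n) j)) = B (lift ord0 (rev_ord j)).
  move=> j; congr B; apply: val_inj => /=; rewrite /bump /= add1n subnSK //.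
have EQ : \prod_(i < n) B (rev_ord (widen_ord (leqnSn n) i)) = \prod_(i < n) B (lift ord0 (rev_ord i)).
  by apply: eq_bigr => j _; congr B; apply: val_inj => /=; rewrite /bump /= add1n subnSK.
rewrite EQ.
have hrev : rev_ord (@ord_max n) = ord0 by apply: val_inj => /=; rewrite subnn.
rewrite hrev.
set P := \prod_(i < n) A (lift ord0 i).
set Q := \prod_(i < n) B (lift ord0 (rev_ord i)).
have -> : A ord0 * P * c%:M * (Q * B ord0) = A ord0 * (P * c%:M * Q) * B ord0 by rewrite !mulrA.
rewrite /P /Q (IH (fun j => A (lift ord0 j)) (fun j => B (lift ord0 j)) (fun j => d (lift ord0 j))); last by move=> j; apply: H.
rewrite -mulmxE scalar_mxC mulmxE -mulrA H -mulmxE -scalar_mxM.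
by congr (_ %:M); rewrite -mulrA [d ord0 * _]mulrC.
Qed.

Definition ct (f : C -> C) := f x @[x --> nbhs (1:C)] --> f 1.
Definition mct (M : C -> 'M[C]_2) := forall i j, ct (fun z => M z i j).

Lemma ct_ext (f g : C -> C) : f =1 g -> ct g -> ct f.
Proof. by move/funext ->. Qed.
Lemma ct_cst (c : C) : ct (fun _ => c).
Proof. exact: cvg_cst. Qed.
Lemma ct_id : ct (fun z => z).
Proof. exact: cvg_id. Qed.
Lemma ct_add {f g} : ct f -> ct g -> ct (fun z => f z + g z).
Proof. move=> hf hg. have H := cvgD hf hg. exact: H. Qed.
Lemma ct_sub {f g} : ct f -> ct g -> ct (fun z => f z - g z).
Proof. move=> hf hg. have H := cvgB hf hg. exact: H. Qed.
Lemma ct_mul {f g} : ct f -> ct g -> ct (fun z => f z * g z).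
Proof. move=> hf hg. have H := cvgM hf hg. exact: H. Qed.
Lemma ct_inv {f} : ct f -> f 1 != 0 -> ct (fun z => (f z)^-1).
Proof. move=> hf h0. have H := cvgV h0 hf. exact: H. Qed.
Lemma ct_exp {f} n : ct f -> ct (fun z => f z ^+ n).
Proof.
move=> hf; elim: n => [|n IH].
  by apply: (ct_ext _ (fun _ => 1)) => [z|]; [rewrite expr0 | apply: ct_cst].
by apply: (ct_ext _ (fun z => f z * f z ^+ n)) => [z|]; [rewrite exprS | apply: ct_mul].
Qed.
Lemma ct_sum (I : Type) (r : seq I) (P : pred I) (F : I -> C -> C) :
  (forall i, ct (F i)) -> ct (fun z => \sum_(i <- r | P i) F i z).
Proof.
move=> hF; elim: r => [|x r IH].
  by apply: (ct_ext _ (fun _ => 0)) => [z|]; [rewrite big_nil | apply: ct_cst].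
case hx: (P x).
  apply: (ct_ext _ (fun z => F x z + \sum_(i <- r | P i) F i z)) => [z|].
    by rewrite big_cons hx.
  exact: (ct_add (hF x) IH).
apply: (ct_ext _ (fun z => \sum_(i <- r | P i) F i z)) => [z|//].
by rewrite big_cons hx.
Qed.

Lemma mct_mul {A B} : mct A -> mct B -> mct (fun z => A z * B z).
Proof.
move=> hA hB i j.
apply: (ct_ext _ (fun z => A z i 0 * B z 0 j + A z i 1 * B z 1 j)) => [z|].
  by rewrite -mulmxE mxE sum2.
by apply: ct_add; apply: ct_mul.
Qed.
Lemma mct_cst (M : 'M[C]_2) : mct (fun _ => M).
Proof. move=> i j; exact: ct_cst. Qed.
Lemma mct_prod (I : Type) (r : seq I) (P : pred I) (F : I -> C -> 'M[C]_2) :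
  (forall i, mct (F i)) -> mct (fun z => \prod_(i <- r | P i) F i z).
Proof.
move=> hF; elim: r => [|x r IH].
  move=> i j; apply: (ct_ext _ (fun _ => (1 : 'M[C]_2) i j)) => [z|].
    by rewrite big_nil.
  exact: ct_cst.
case hx: (P x).
  move=> i j; apply: (ct_ext _ (fun z => (F x z * \prod_(i <- r | P i) F i z) i j)) => [z|].
    by rewrite big_cons hx.
  exact: (mct_mul (hF x) IH).
move=> i j; apply: (ct_ext _ (fun z => (\prod_(i <- r | P i) F i z) i j)) => [z|].
  by rewrite big_cons hx.
exact: IH.
Qed.
Lemma ct_tr M : mct M -> ct (fun z => \tr (M z)).
Proof.
move=> hM; apply: (ct_ext _ (fun z => M z 0 0 + M z 1 1)) => [z|].
  by rewrite /mxtrace sum2.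
exact: ct_add.
Qed.

Lemma ord2P (i : 'I_2) : i = 0 \/ i = 1.
Proof. case: i => [[|[|?]] ?]; [left|right|by []]; exact: val_inj. Qed.

Lemma Lax_entries (e f k z : C) :
  [/\ Lax e f k z 0 0 = z * k - z^-1 * k^-1, Lax e f k z 0 1 = e,
      Lax e f k z 1 0 = f & Lax e f k z 1 1 = z * k^-1 - z^-1 * k].
Proof. Timeout 20 by split; rewrite mxE. Qed.
Lemma Kmat_entries (xi z : C) :
  [/\ Kmat xi z 0 0 = xi * z - z^-1 * xi^-1, Kmat xi z 0 1 = 0,
      Kmat xi z 1 0 = 0 & Kmat xi z 1 1 = xi * z^-1 - z * xi^-1].
Proof. by split; rewrite mxE. Qed.

Lemma mct_Lax (e f k : C) (u : C -> C) : ct u -> u 1 != 0 ->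
  mct (fun z => Lax e f k (u z)).
Proof.
move=> hu h1 i j.
have hv := ct_inv hu h1.
case: (ord2P i) => ->; case: (ord2P j) => ->.
- apply: (ct_ext _ (fun z => u z * k - (u z)^-1 * k^-1)).
    by move=> z; case: (Lax_entries e f k (u z)).
  exact: (ct_sub (ct_mul hu (ct_cst _)) (ct_mul hv (ct_cst _))).
- apply: (ct_ext _ (fun z => e)); first by move=> z; case: (Lax_entries e f k (u z)).
  exact: ct_cst.
- apply: (ct_ext _ (fun z => f)); first by move=> z; case: (Lax_entries e f k (u z)).
  exact: ct_cst.
- apply: (ct_ext _ (fun z => u z * k^-1 - (u z)^-1 * k)).
    by move=> z; case: (Lax_entries e f k (u z)).
  exact: (ct_sub (ct_mul hu (ct_cst _)) (ct_mul hv (ct_cst _))).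
Qed.

Lemma mct_Kmat (xi : C) : mct (fun z => Kmat xi z).
Proof.
move=> i j.
have hi : ct (fun z : C => z^-1) by apply: (ct_inv ct_id); exact: oner_neq0.
case: (ord2P i) => ->; case: (ord2P j) => ->.
- apply: (ct_ext _ (fun z => xi * z - z^-1 * xi^-1)).
    by move=> z; case: (Kmat_entries xi z).
  exact: (ct_sub (ct_mul (ct_cst _) ct_id) (ct_mul hi (ct_cst _))).
- apply: (ct_ext _ (fun z => 0)); first by move=> z; case: (Kmat_entries xi z).
  exact: ct_cst.
- apply: (ct_ext _ (fun z => 0)); first by move=> z; case: (Kmat_entries xi z).
  exact: ct_cst.
- apply: (ct_ext _ (fun z => xi * z^-1 - z * xi^-1)).
    by move=> z; case: (Kmat_entries xi z).
  exact: (ct_sub (ct_mul (ct_cst _) hi) (ct_mul ct_id (ct_cst _))).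
Qed.
End S.
Arguments ct_add {R f g}. Arguments ct_sub {R f g}. Arguments ct_mul {R f g}.
Arguments ct_inv {R f}. Arguments ct_exp {R f}. Arguments ct_cst {R}.
Arguments ct_id {R}. Arguments mct_mul {R A B}.

Theorem mainTheorem1 (R : realType) (N : nat) (xi : C R) (a : 'I_N -> C R)
  (t : 'I_N -> C R) (e f k : 'I_N -> C R) (P : 'I_N.+1 -> C R) :
  (1 <= N)%N -> xi != 0 -> (forall j, a j != 0) ->
  (forall j, k j != 0) -> (forall j, casimir (e j) (f j) (k j) = t j) ->
  reflection_hamiltonians xi a e f k P ->
  ((fun z : C R => (z - z^-1) * transfer xi a e f k z) @ (1 : C R)^'
     --> \sum_(j < N.+1) P j)
  /\ \sum_(j < N.+1) P j
     = (xi - xi^-1) * \prod_(j < N) (t j - a j ^+ 2 - a j ^- 2).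
Proof.
move=> hN hxi ha hk ht hP.
pose S := fun z : C R => \sum_(j < N.+1) P j * (((z ^+ 2) ^+ j + (z ^+ 2) ^- j) / 2).
pose h1 := fun z : C R => 2^-1 * (z ^+ 2 + 1) * z^-1 * S z.
pose Mp := fun z : C R => (\prod_(j < N) Lax (e j) (f j) (k j) (a j * z)) * Kmat xi z *
    (\prod_(j < N) Lax (e (rev_ord j)) (f (rev_ord j)) (k (rev_ord j)) (z / a (rev_ord j))).
pose h2 := fun z : C R => 2^-1 * \tr (Mp z).
pose g := fun z : C R => (z - z^-1) * transfer xi a e f k z.
have hnear : \forall z \near (1 : C R)^', z != 0 /\ z ^+ 2 != 1.
  have h0 : \forall z \near nbhs (1:C R), z != 0.
    exact: (cvgr_neq0 (f := fun z : C R => z) 1 ct_id (oner_neq0 _)).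
  have hp : \forall z \near nbhs (1:C R), z + 1 != 0.
    have h11 : (1 + 1 : C R) != 0 by rewrite -[1+1]/(2%:R) pnatr_eq0.
    have hc : ct R (fun z => z + 1) := ct_add ct_id (ct_cst 1).
    exact: (cvgr_neq0 _ hc h11).
  near=> z; split.
    near: z; exact: (cvg_within _ h0).
  rewrite -subr_eq0 subr_sqr_1 mulf_neq0 //; last by near: z; exact: (cvg_within _ hp).
  rewrite subr_eq0; near: z; exact: nbhs_dnbhs_neq.
have h2ne : (2 : C R) != 0 by rewrite pnatr_eq0.
have e1 : {near (1:C R)^', h1 =1 g}.
  near=> z.
  have [hz0 hz2] : z != 0 /\ z ^+ 2 != 1 by near: z; exact: hnear.
  have hz21 : z ^+ 2 - 1 != 0 by rewrite subr_eq0.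
  have E := hP z hz0 hz2; cbv zeta in E.
  rewrite /h1 /g E /S.
  set s := \sum_(j < N.+1) _.
  by field; rewrite hz21 hz0.
have e2 : {near (1:C R)^', h2 =1 g}.
  near=> z.
  have [hz0 hz2] : z != 0 /\ z ^+ 2 != 1 by near: z; exact: hnear.
  have hc : z - z^-1 != 0.
    apply/negP; rewrite subr_eq0 => /eqP H; move: hz2.
    by rewrite expr2 {1}H mulVf // eqxx.
  rewrite /h2 /g /transfer /monodromy mxtraceZ /Mp.
  set T := \tr _; by rewrite mulrCA mulVKf.
have hinv : ct R (fun z => z^-1) by apply: (ct_inv ct_id); exact: oner_neq0.
have c1 : ct R h1.
  have hS : ct R S.
    apply: ct_sum => j.
    apply: (ct_mul (ct_cst _)); apply: ct_mul; last exact: ct_cst.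
    apply: ct_add; first exact: (ct_exp _ (ct_exp _ ct_id)).
    apply: ct_inv; first exact: (ct_exp _ (ct_exp _ ct_id)).
    by rewrite !expr1n oner_neq0.
  apply: (ct_mul _ hS); apply: (ct_mul _ hinv).
  apply: (ct_mul (ct_cst _)); apply: (ct_add _ (ct_cst _)); exact: (ct_exp _ ct_id).
have v1 : h1 1 = \sum_(j < N.+1) P j.
  rewrite /h1 /S expr1n invr1 mulr1.
  have -> : 2^-1 * (1 + 1) = 1 :> C R by rewrite -[1+1]/(2%:R) mulVf.
  rewrite mul1r; apply: eq_bigr => j _.
  by rewrite !expr1n invr1 -[1+1]/(2%:R) mulfV // mulr1.
have L1 : g x @[x --> (1:C R)^'] --> \sum_(j < N.+1) P j.
  apply: (cvg_trans (near_eq_cvg e1)); rewrite -v1.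
  exact: (cvg_within_filter _ c1).
have c2 : ct R h2.
  apply: (ct_mul (ct_cst _)); apply: ct_tr; rewrite /Mp.
  apply: mct_mul; first apply: mct_mul.
  - apply: mct_prod => j; apply: mct_Lax; first exact: (ct_mul (ct_cst _) ct_id).
    by rewrite mulr1.
  - exact: mct_Kmat.
  - apply: mct_prod => j; apply: mct_Lax; first exact: (ct_mul ct_id (ct_cst _)).
    by rewrite mul1r invr_eq0.
have v2 : h2 1 = (xi - xi^-1) * \prod_(j < N) (t j - a j ^+ 2 - a j ^- 2).
  have T := @telescope R N (fun j => Lax (e j) (f j) (k j) (a j * 1))
     (fun j => Lax (e j) (f j) (k j) (1 / a j))
     (fun j => casimir (e j) (f j) (k j) - a j ^+ 2 - a j ^- 2) (xi - xi^-1)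
     (fun j => @LL R (e j) (f j) (k j) (a j) (ha j) (hk j)).
  have half : forall y : C R, 2^-1 * (y *+ 2) = y by move=> y; rewrite mulr2n; field.
  rewrite /h2 /Mp Kmat1 T mxtrace_scalar half.
  by congr (_ * _); apply: eq_bigr => j _; rewrite ht.
have L2 : g x @[x --> (1:C R)^'] --> (xi - xi^-1) * \prod_(j < N) (t j - a j ^+ 2 - a j ^- 2).
  apply: (cvg_trans (near_eq_cvg e2)); rewrite -v2.
  exact: (cvg_within_filter _ c2).
split; first exact: L1.
exact: (cvg_unique _ L1 L2).
Unshelve. all: by end_near.
Qed.
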